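(* Let $D$ be an integral domain of characteristic zero. Suppose that every $D$-algebra endomorphism of $A_1(D)$ is an automorphism of $A_1(D)$. Then for all $A,B,w\in A_1(D)$ with $[A,B]\in D^*$ and $[A,w]=0$, one has $w\in D[A]$.
   Context: For a commutative ring $R$, the first Weyl algebra $A_1(R)$ is the unital associative $R$-algebra generated by $X,Y$ subject to $[Y,X]=YX-XY=1$; it is a free $R$-module with basis $\{X^iY^j\}_{i,j\ge0}$. $[P,Q]=PQ-QP$. $D^*$ is the group of units of $D$. $D[A]$ denotes the $D$-subalgebra of $A_1(D)$ generated by $A$. *)

(* Defs.v *)
From HB Require Import structures.
From mathcomp Require Import all_boot all_order all_algebra.
Set Implicit Arguments. Unset Strict Implicit. Unset Printing Implicit Defensive.
Import Order.TTheory GRing.Theory Num.Theory.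
Local Open Scope ring_scope.

Definition comm_br (W : pzRingType) (P Q : W) : W := P * Q - Q * P.

(* Monomial-expansion map: a coefficient family (c_{ij}), encoded as a
   polynomial in polynomials p with c_{ij} = (p`_i)`_j, is sent to
   \sum_{i,j} c_{ij} X^i Y^j. *)
Definition weyl_expand (D : comNzRingType) (W : algType D) (X Y : W)
    (p : {poly {poly D}}) : W :=
  \sum_(i < size p) \sum_(j < size p`_i) (p`_i)`_j *: (X ^+ i * Y ^+ j).

(* W together with X, Y is (a copy of) the first Weyl algebra A_1(D):
   the unital associative D-algebra generated by X, Y subject to
   YX - XY = 1, free as a D-module on the basis {X^i Y^j}. *)
Definition is_weyl_algebra (D : comNzRingType) (W : algType D) (X Y : W) : Prop :=
  comm_br Y X = 1 /\ bijective (weyl_expand X Y).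

Definition alg_endo (D : comNzRingType) (W : algType D) (f : W -> W) : Prop :=
  linear f /\ monoid_morphism f.

Definition in_subalg1 (D : comNzRingType) (W : algType D) (A w : W) : Prop :=
  exists p : {poly D}, w = \sum_(i < size p) p`_i *: A ^+ i.

(* Main.v *)
Require Import Defs.
From HB Require Import structures.
From mathcomp Require Import all_boot all_order all_algebra.
Import GRing.Theory.
Local Open Scope ring_scope.

Lemma sum_widen (V : nmodType) (m n : nat) (F : nat -> V) :
  (m <= n)%N -> (forall j, (m <= j)%N -> (j < n)%N -> F j = 0) ->
  \sum_(j < m) F j = \sum_(j < n) F j.
Proof.
move=> mn H.
rewrite -(big_mkord xpredT F) -(big_mkord xpredT F) (@big_cat_nat _ _ _ m 0 n xpredT F (leq0n m) mn) /=.
rewrite [X in _ + X]big1_seq ?addr0 // => j /andP[_]; rewrite mem_index_iota => /andP[].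
exact: H.
Qed.

Section Weyl.
Variables (D : comNzRingType) (W : algType D).
Implicit Types (X Y : W) (p q : {poly {poly D}}).

Definition Mb p : nat := \max_(i < size p) size (nth 0%R p i).

Lemma Mb_ok p i j : (size p <= i)%N || (Mb p <= j)%N -> (p`_i)`_j = 0.
Proof.
case/orP => H; first by rewrite (nth_default _ H) coef0.
case: (ltnP i (size p)) => Hi; last by rewrite (nth_default _ Hi) coef0.
apply: nth_default; apply: leq_trans H.
exact: (@leq_bigmax_cond _ xpredT (fun i : 'I_(size p) => size p`_i) (Ordinal Hi)).
Qed.

Lemma E_bound X Y p N M :
  (forall i j, (N <= i)%N || (M <= j)%N -> (p`_i)`_j = 0) ->
  weyl_expand X Y p = \sum_(i < N) \sum_(j < M) (p`_i)`_j *: (X ^+ i * Y ^+ j).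
Proof.
move=> H.
have sp : (size p <= N)%N.
  apply/leq_sizeP => i Ni; apply/polyP => j; rewrite coef0; apply: H; by rewrite Ni.
have sq i : (size (nth 0%R p i) <= M)%N.
  apply/leq_sizeP => j Mj; apply: H; by rewrite Mj orbT.
rewrite /weyl_expand (@sum_widen _ _ _ (fun i => \sum_(j < size p`_i) (p`_i)`_j *: (X ^+ i * Y ^+ j)) sp) //; last first.
  by move=> i Hi _; rewrite nth_default // size_poly0 big_ord0.
apply: eq_bigr => i _.
rewrite (@sum_widen _ _ _ (fun j => (p`_i)`_j *: (X ^+ i * Y ^+ j)) (sq i)) //.
by move=> j Hj _; rewrite nth_default // scale0r.
Qed.

Arguments E_bound {X Y p N M}.

Lemma E_bnd X Y p : weyl_expand X Y p =
  \sum_(i < size p) \sum_(j < Mb p) (p`_i)`_j *: (X ^+ i * Y ^+ j).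
Proof. by apply: E_bound => i j; apply: Mb_ok. Qed.

Lemma E_lin X Y (c : D) p q :
  weyl_expand X Y (c%:P *: p + q) = c *: weyl_expand X Y p + weyl_expand X Y q.
Proof.
set N := maxn (size p) (size q); set M := maxn (Mb p) (Mb q).
have Hp i j : (N <= i)%N || (M <= j)%N -> (p`_i)`_j = 0.
  move=> H; apply: Mb_ok; move: H; rewrite !geq_max.
  by case/orP => /andP[-> _] //; rewrite orbT.
have Hq i j : (N <= i)%N || (M <= j)%N -> (q`_i)`_j = 0.
  move=> H; apply: Mb_ok; move: H; rewrite !geq_max.
  by case/orP => /andP[_ ->] //; rewrite orbT.
rewrite (E_bound Hp) (E_bound Hq) (E_bound (N:=N) (M:=M)); last first.
  by move=> i j H; rewrite coefD coefZ coefD coefCM Hp // Hq // mulr0 addr0.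
rewrite scaler_sumr -big_split; apply: eq_bigr => i _.
rewrite scaler_sumr -big_split; apply: eq_bigr => j _.
by rewrite coefD coefZ coefD coefCM scalerDl scalerA.
Qed.

Lemma E0 X Y : weyl_expand X Y 0 = 0.
Proof. by rewrite /weyl_expand size_poly0 big_ord0. Qed.

Lemma E_add X Y p q : weyl_expand X Y (p + q) = weyl_expand X Y p + weyl_expand X Y q.
Proof. by have := E_lin X Y 1 p q; rewrite polyC1 !scale1r. Qed.

Lemma E1 X Y : weyl_expand X Y 1 = 1.
Proof.
rewrite (E_bound (N := 1) (M := 1)).
  by rewrite !big_ord1 /= coefC /= coefC /= scale1r mulr1.
move=> i j; case: i => [|i]; case: j => [|j] //= _; rewrite ?coefC //= coefC //.
Qed.

Lemma E_X X Y p : X * weyl_expand X Y p = weyl_expand X Y (p * 'X).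
Proof.
rewrite E_bnd (E_bound (N := (size p).+1) (M := Mb p)); last first.
  move=> [|i] j H; rewrite coefMX //= ?coef0 //; apply: Mb_ok; by rewrite ltnS in H.
rewrite big_ord_recl coefMX /= [X in _ = X + _]big1 ?add0r; last by move=> j _; rewrite coef0 scale0r.
rewrite mulr_sumr; apply: eq_bigr => i _; rewrite mulr_sumr; apply: eq_bigr => j _.
by rewrite coefMX /= ?add0n exprS -mulrA -scalerAr.
Qed.

Lemma E_Yr X Y p : weyl_expand X Y p * Y = weyl_expand X Y (p * ('X)%:P).
Proof.
rewrite E_bnd (E_bound (N := size p) (M := (Mb p).+1)); last first.
  move=> i [|j] H; rewrite coefMC coefMX //= Mb_ok //; by rewrite ltnS in H.
rewrite mulr_suml; apply: eq_bigr => i _.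
rewrite big_ord_recl coefMC coefMX /= scale0r add0r mulr_suml; apply: eq_bigr => j _.
by rewrite coefMX /= ?add0n exprSr -scalerAl mulrA.
Qed.

Lemma YXn X Y : Y * X - X * Y = 1 -> forall i,
  Y * X ^+ i = X ^+ i * Y + X ^+ i.-1 *+ i.
Proof.
move=> h; elim=> [|i IH]; first by rewrite expr0 mul1r mulr1 mulr0n addr0.
rewrite exprSr mulrA IH mulrDl -mulrA.
have -> : Y * X = X * Y + 1 by rewrite -h addrC subrK.
rewrite mulrDr mulr1 mulrA -exprSr.
case: i {IH} => [|i] /=; first by rewrite mulr0n mul0r expr0 addr0.
by rewrite mulrnAl -exprSr -addrA -mulrS.
Qed.

Lemma E_Y X Y p : Y * X - X * Y = 1 ->
  Y * weyl_expand X Y p = weyl_expand X Y p * Y + weyl_expand X Y p^`().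
Proof.
move=> h.
have -> : weyl_expand X Y p * Y + weyl_expand X Y p^`() =
   \sum_(i < (size p).+1) \sum_(j < Mb p) (p`_i)`_j *: (Y * (X ^+ i * Y ^+ j)).
  rewrite [X in X * _](E_bound (N := (size p).+1) (M := Mb p)); last first.
    move=> i j H; apply: Mb_ok; move: H; case/orP => [H|->]; last by rewrite orbT.
    by rewrite ltnW.
  rewrite (E_bound (p := p^`()) (N := size p) (M := Mb p)); last first.
    move=> i j H; rewrite coef_deriv coefMn Mb_ok ?mul0rn //.
    by case/orP: H => [H|->]; [rewrite ltnW | rewrite orbT].
  under [RHS]eq_bigr => i _ do under eq_bigr => j _ do
    rewrite mulrA (YXn X Y h) mulrDl scalerDr.
  under [RHS]eq_bigr => i _ do rewrite big_split.
  rewrite big_split /=; congr (_ + _).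
    rewrite mulr_suml; apply: eq_bigr => i _; rewrite mulr_suml; apply: eq_bigr => j _.
    by rewrite -scalerAl -!mulrA -exprS -exprSr.
  rewrite [RHS]big_ord_recl /= [X in _ = X + _]big1 ?add0r; last first.
    by move=> j _; rewrite mulr0n mul0r scaler0.
  apply: eq_bigr => i _; apply: eq_bigr => j _.
  by rewrite coef_deriv coefMn -scalerMnl scalerMnr /bump /= add0n mulrnAl.
rewrite (E_bound (p := p) (N := (size p).+1) (M := Mb p)); last first.
  move=> i j H; apply: Mb_ok; move: H; case/orP => [H|->]; last by rewrite orbT.
  by rewrite ltnW.
rewrite mulr_sumr; apply: eq_bigr => i _; rewrite mulr_sumr; apply: eq_bigr => j _.
by rewrite -scalerAr.
Qed.
End Weyl.

Lemma natmul_poly_eq0 (D : idomainType) (q : {poly D}) n :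
  [pchar D] =i pred0 -> q *+ n.+1 = 0 -> q = 0.
Proof.
move=> hc H; apply/polyP => j; have := congr1 (fun r : {poly D} => r`_j) H.
rewrite /= coefMn !coef0 => /eqP; rewrite -mulr_natr mulf_eq0.
by move/pcharf0P: hc => ->; rewrite orbF => /eqP.
Qed.

Theorem theorem4p8 (D : idomainType) (W : algType D) (X Y : W) :
  [pchar D] =i pred0 ->
  is_weyl_algebra X Y ->
  (forall f : W -> W, alg_endo f -> bijective f) ->
  forall A B w : W,
    (exists2 u : D, u \is a GRing.unit & comm_br A B = u%:A) ->
    comm_br A w = 0 ->
    in_subalg1 A w.
Proof.
move=> hc [hYX [gi gK giK]] hend A B w [u uU hAB] hAw.
rewrite /comm_br in hYX hAB hAw.
pose X' := u^-1 *: B.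
have hY'X' : A * X' - X' * A = 1.
  rewrite /X' -scalerAr -scalerAl -scalerBr hAB scalerA mulVr //.
  by rewrite scale1r.
pose f := fun a => weyl_expand X' A (gi a).
have g_inj : injective (weyl_expand X Y) := can_inj gK.
have gi_lin c a b : gi (c *: a + b) = c%:P *: gi a + gi b.
  by apply: g_inj; rewrite giK (@E_lin _ _ X Y c (gi a) (gi b)) !giK.
have gi0 : gi 0 = 0 by apply: g_inj; rewrite E0 giK.
have gi1 : gi 1 = 1 by apply: g_inj; rewrite giK E1.
have f_lin c a b : f (c *: a + b) = c *: f a + f b by rewrite /f gi_lin E_lin.
have f0 : f 0 = 0 by rewrite /f gi0 E0.
have f1 : f 1 = 1 by rewrite /f gi1 E1.
have fD a b : f (a + b) = f a + f b by have := f_lin 1 a b; rewrite !scale1r.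
have fZ c a : f (c *: a) = c *: f a by have := f_lin c a 0; rewrite !addr0 f0 addr0.
have fB a b : f (a - b) = f a - f b.
  by rewrite fD -scaleN1r fZ scaleN1r.
have fX a : f (X * a) = X' * f a.
  by rewrite /f -{1}(giK a) E_X gK -E_X.
have fY a : f (Y * a) = A * f a.
  by rewrite /f -{1}(giK a) (E_Y _ _ _ _ _ hYX) E_Yr -E_add gK E_add -E_Yr -E_Y.
have fXn i a : f (X ^+ i * a) = X' ^+ i * f a.
  elim: i => [|i IH]; first by rewrite !expr0 !mul1r.
  by rewrite !exprS -!mulrA fX IH.
have fYn i a : f (Y ^+ i * a) = A ^+ i * f a.
  elim: i => [|i IH]; first by rewrite !expr0 !mul1r.
  by rewrite !exprS -!mulrA fY IH.
have fM a b : f (a * b) = f a * f b.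
  have -> : f a = weyl_expand X' A (gi a) by [].
  rewrite -{1}(giK a) !E_bnd !mulr_suml (big_morph f fD f0).
  apply: eq_bigr => i _; rewrite !mulr_suml (big_morph f fD f0).
  apply: eq_bigr => j _.
  by rewrite -!scalerAl fZ -!mulrA fXn fYn.
have [fi fK fiK] : bijective f.
  apply: hend; split; first by move=> c a b; exact: f_lin.
  by split; [exact: f1 | move=> a b; exact: fM].
pose v := fi w.
have fv : f v = w := fiK w.
have fYe : f Y = A by rewrite -[Y]mulr1 fY f1 mulr1.
have hYv : Y * v - v * Y = 0.
  apply: (can_inj fK); by rewrite fB !fM fYe fv hAw f0.
pose p := gi v.
have hdp : p^`() = 0.
  have vE : v = weyl_expand X Y p by rewrite /p giK.
  apply: g_inj; rewrite E0 -hYv vE (E_Y _ _ _ _ _ hYX).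
  by rewrite addrAC subrr add0r.
have hp i : p`_i.+1 = 0.
  apply: (@natmul_poly_eq0 _ _ i hc).
  by rewrite -coef_deriv hdp coef0.
exists (p`_0).
rewrite -fv /f -/p (@E_bound _ _ X' A p 1 (size p`_0)); last first.
  move=> [|i] j /= H; first by rewrite nth_default.
  by rewrite hp coef0.
rewrite big_ord1; apply: eq_bigr => j _.
by rewrite expr0 mul1r.
Qed.
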